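(* Suppose $n$ qubits are distributed among a finite set of parties $M$, $n=\sum_{\alpha\in M}n_\alpha$, and let $S,S'\subseteq G^n$ be arbitrary linear subspaces. The following are equivalent: (1) there exist $u_\alpha\in\mathrm{Sp}(n_\alpha)$, $\alpha\in M$, such that $S'=\big(\bigoplus_{\alpha\in M}u_\alpha\big)\cdot S$, where the direct sum refers to the decomposition $G^n=\bigoplus_{\alpha\in M}G^{n_\alpha}$ into the parties' local subspaces; (2) there exists a linear invertible map $T:S\to S'$ such that (i) $\omega(T(f)_\alpha,T(g)_\alpha)=\omega(f_\alpha,g_\alpha)$ for all $f,g\in S$ and $\alpha\in M$, and (ii) $T\cdot S_{\hat\alpha}=S'_{\hat\alpha}$ for all $\alpha\in M$.
   Context: Let $G^n\cong\mathbb{F}_2^{2n}$, with elements written $f=(a_1,b_1,\dots,a_n,b_n)$, equipped with the symplectic form $\omega(f,f')=\sum_{j=1}^n(a_jb_j'+b_ja_j')\bmod 2$. $\mathrm{Sp}(n)$ denotes the group of linear bijections $u:G^n\to G^n$ with $\omega(u(f),u(g))=\omega(f,g)$ for all $f,g$. When party $\alpha\in M$ holds $n_\alpha$ of the $n$ qubits, $G^n=\bigoplus_\alpha G^{n_\alpha}$ (coordinates $(a_j,b_j)$ grouped by the owner of qubit $j$), $f_\alpha\in G^{n_\alpha}$ denotes the component of $f$ for party $\alpha$, and $\omega(f_\alpha,g_\alpha)$ is the symplectic form of $G^{n_\alpha}$. For a subspace $S\subseteq G^n$, the co-local subspace is $S_{\hat\alpha}=\{g\in S:g_\alpha=0\}$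 (equal to $S$ if $n_\alpha=0$). *)

(* Defs.v *)
From HB Require Import structures.
From mathcomp Require Import all_boot all_order all_algebra.
Set Implicit Arguments. Unset Strict Implicit. Unset Printing Implicit Defensive.
Import GRing.Theory.
Local Open Scope ring_scope.

(* G over a finite index set I of qubits: each qubit j carries (a_j, b_j),
   stored as the row vector [a_j b_j] : 'rV['F_2]_2. G^n = G 'I_n. *)
Definition G (I : finType) := {ffun I -> 'rV['F_2]_2}.

Definition acoord (I : finType) (f : G I) (j : I) : 'F_2 := f j 0 0.
Definition bcoord (I : finType) (f : G I) (j : I) : 'F_2 := f j 0 1.

Definition omega (I : finType) (f g : G I) : 'F_2 :=
  \sum_(j : I) (acoord f j * bcoord g j + bcoord f j * acoord g j).

Definition is_Sp (I : finType) (u : G I -> G I) : Prop :=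
  [/\ linear u, bijective u & forall f g, omega (u f) (u g) = omega f g].

Definition Qub (n : nat) (M : finType) (own : 'I_n -> M) (alpha : M) : finType :=
  {j : 'I_n | own j == alpha}.

Definition loc_comp (n : nat) (M : finType) (own : 'I_n -> M) (alpha : M)
  (f : G 'I_n) : G (Qub own alpha) := [ffun j => f (sval j)].

Definition dsum (n : nat) (M : finType) (own : 'I_n -> M)
  (u : forall alpha : M, G (Qub own alpha) -> G (Qub own alpha))
  (f : G 'I_n) : G 'I_n :=
  [ffun j => u (own j) (loc_comp own (own j) f)
                 (exist (fun k : 'I_n => own k == own j) j (eqxx (own j)))].

Arguments Qub {n M} own alpha.
Arguments loc_comp {n M} own alpha f.
Arguments dsum {n M} own u f.
Arguments omega {I} f g.
Arguments is_Sp {I} u.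

(* Main.v *)
Require Import Defs.
From HB Require Import structures.
From mathcomp Require Import all_boot all_order all_algebra.
From mathcomp Require Import ring.
Import GRing.Theory.
Local Open Scope ring_scope.
Set Implicit Arguments. Unset Strict Implicit. Unset Printing Implicit Defensive.

Lemma F2_cases (x : 'F_2) : x = 0 \/ x = 1.
Proof. case: x => [[|[|m]] Hm]; [left|right|]; try by apply/val_inj. by []. Qed.

Lemma F2_dbl (x : 'F_2) : x + x = 0.
Proof. by case: (F2_cases x) => ->; apply/val_inj. Qed.

Lemma F2_opp (x : 'F_2) : - x = x.
Proof. by case: (F2_cases x) => ->; apply/val_inj. Qed.

Lemma G_opp (I : finType) (v : G I) : - v = v.
Proof. by rewrite -scaleN1r F2_opp scale1r. Qed.

Lemma G_dbl (I : finType) (v : G I) : v + v = 0.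
Proof. by rewrite -{1}(G_opp v) addNr. Qed.

Section Om.
Variable I : finType.
Implicit Types x y z : G I.

Lemma omegaE x y : omega x y = \sum_j (x j 0 0 * y j 0 1 + x j 0 1 * y j 0 0).
Proof. by []. Qed.

Lemma omega_addl x y z : omega (x + y) z = omega x z + omega y z.
Proof.
rewrite !omegaE -big_split /=; apply: eq_bigr => j _; rewrite !ffunE !mxE; ring.
Qed.

Lemma omega_scalel k x y : omega (k *: x) y = k * omega x y.
Proof.
rewrite !omegaE mulr_sumr; apply: eq_bigr => j _; rewrite !ffunE !mxE; ring.
Qed.

Lemma omega_sym x y : omega x y = omega y x.
Proof. rewrite !omegaE; apply: eq_bigr => j _; ring. Qed.

Lemma omega_addr x y z : omega x (y + z) = omega x y + omega x z.
Proof. by rewrite omega_sym omega_addl !(omega_sym x). Qed.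

Lemma omega_scaler k x y : omega x (k *: y) = k * omega x y.
Proof. by rewrite omega_sym omega_scalel omega_sym. Qed.

Lemma omega_alt x : omega x x = 0.
Proof.
rewrite omegaE big1 // => j _; rewrite mulrC F2_dbl //.
Qed.

Lemma omega0l y : omega 0 y = 0.
Proof. by rewrite -(scale0r 0) omega_scalel mul0r. Qed.
Lemma omega0r y : omega y 0 = 0.
Proof. by rewrite omega_sym omega0l. Qed.
End Om.
Section Riesz.
Variable I : finType.
Definition ev (j : I) (k : 'I_2) : G I := [ffun j' => if j' == j then delta_mx 0 k else 0].

Lemma decompG (y : G I) : y = \sum_j (y j 0 0 *: ev j 0 + y j 0 1 *: ev j 1).
Proof.
apply/ffunP => j'; rewrite sum_ffunE (bigD1 j') //= big1 => [|j /negbTE Hj].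
  rewrite !ffunE eqxx addr0; apply/matrixP => i k; rewrite !mxE.
  rewrite (ord1 i); case: k => [[|[|m]] Hm] //=.
    by rewrite mulr1 mulr0 addr0; congr (y j' 0 _); apply/val_inj.
  by rewrite mulr1 mulr0 add0r; congr (y j' 0 _); apply/val_inj.
by rewrite !ffunE eq_sym Hj !scaler0 addr0.
Qed.

Lemma riesz (phi : G I -> 'F_2) : (forall x y, phi (x + y) = phi x + phi y) ->
  exists x, forall y, omega x y = phi y.
Proof.
move=> Hadd.
have H0 : phi 0 = 0 by apply: (@addrI _ (phi 0)); rewrite -Hadd !addr0.
have HZ k v : phi (k *: v) = k * phi v.
  by case: (F2_cases k) => ->; rewrite ?scale0r ?mul0r ?scale1r ?mul1r.
have Hsum (r : seq I) (F : I -> G I) : phi (\sum_(j <- r) F j) = \sum_(j <- r) phi (F j).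
  by apply: (big_morph phi Hadd H0).
exists [ffun j => (phi (ev j 1)) *: delta_mx 0 0 + (phi (ev j 0)) *: delta_mx 0 1].
move=> y; rewrite {2}(decompG y) Hsum omegaE; apply: eq_bigr => j _.
rewrite Hadd !HZ !ffunE !mxE /=.
rewrite !mulr1 !mulr0 addr0 add0r; ring.
Qed.
End Riesz.

Section Lin.
Variable I : finType.
Implicit Types (x y z a b d : G I).

Lemma addF2_sum (phi : G I -> 'F_2) (J : Type) (r : seq J) (k : J -> 'F_2) (F : J -> G I) :
  (forall x y, phi (x + y) = phi x + phi y) ->
  phi (\sum_(i <- r) k i *: F i) = \sum_(i <- r) k i * phi (F i).
Proof.
move=> Hadd.
have H0 : phi 0 = 0 by apply: (@addrI _ (phi 0)); rewrite -Hadd !addr0.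
have HZ k' v : phi (k' *: v) = k' * phi v.
  by case: (F2_cases k') => ->; rewrite ?scale0r ?mul0r ?scale1r ?mul1r.
rewrite (big_morph phi Hadd H0); apply: eq_bigr => i _; exact: HZ.
Qed.

Lemma agree_span (X : seq (G I)) (f g : G I -> 'F_2) :
  (forall x y, f (x + y) = f x + f y) -> (forall x y, g (x + y) = g x + g y) ->
  (forall y, y \in X -> f y = g y) -> forall z, z \in <<X>>%VS -> f z = g z.
Proof.
move=> Hf Hg HX z Hz.
have := coord_span (X := in_tuple X) Hz; rewrite /= => ->.
rewrite !addF2_sum //; apply: eq_bigr => i _; congr (_ * _); apply: HX.
exact: mem_nth.
Qed.

Lemma prescribe (X : seq (G I)) (c : G I -> 'F_2) : free X ->
  exists x, forall y, y \in X -> omega x y = c y.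
Proof.
move=> fX; pose t := in_tuple X.
pose phi := fun y => \sum_(i < size X) c X`_i * coord t i y.
have Hphi : forall y1 y2, phi (y1 + y2) = phi y1 + phi y2.
  by move=> y1 y2; rewrite /phi -big_split /=; apply: eq_bigr => i _; rewrite linearD mulrDr.
have [x Hx] := riesz Hphi.
exists x => y Hy; rewrite Hx /phi -(nth_index 0 Hy).
have Hi : (index y X < size X)%N by rewrite index_mem.
rewrite (bigD1 (Ordinal Hi)) //= big1 => [|j Hj].
  have := coord_free (X := t) (Ordinal Hi) (Ordinal Hi) fX; rewrite /= => ->.
  by rewrite eqxx mulr1 addr0.
have := coord_free (X := t) (Ordinal Hi) j fX; rewrite /= => ->.
by rewrite eq_sym (negbTE Hj) mulr0.
Qed.
End Lin.

Section Tr.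
Variable I : finType.
Implicit Types (x y z a b d v : G I).

Definition tr d v : G I := v + omega v d *: d.

Lemma tr_invol d : cancel (tr d) (tr d).
Proof.
move=> v; rewrite /tr omega_addl omega_scalel omega_alt mulr0 addr0.
by rewrite -addrA G_dbl addr0.
Qed.

Lemma tr_Sp d : is_Sp (tr d).
Proof.
split.
- move=> k x y; rewrite /tr omega_addl omega_scalel scalerDl scalerDr -scalerA.
  by rewrite !addrA; congr (_ + _); rewrite -!addrA; congr (_ + _); rewrite addrC.
- by exists (tr d); apply: tr_invol.
- move=> x y; rewrite /tr !omega_addl !omega_addr !omega_scalel !omega_scaler omega_alt.
  rewrite (omega_sym d y).
  have F : forall a b c : 'F_2, a + b*c + (c*b + c*(b*0)) = a + (b*c + b*c) by move=> *; ring.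
  by rewrite F F2_dbl addr0.
Qed.

Lemma id_Sp : is_Sp (@id (G I)).
Proof. by split => //; exists id. Qed.

Lemma comp_Sp (u w : G I -> G I) : is_Sp u -> is_Sp w -> is_Sp (u \o w).
Proof.
case=> Lu Bu Ou [Lv Bv Ov]; split.
- by move=> k x y /=; rewrite Lv Lu.
- exact: bij_comp.
- by move=> x y /=; rewrite Ou Ov.
Qed.

Lemma Sp0 (u : G I -> G I) : is_Sp u -> u 0 = 0.
Proof.
case=> Lu _ _; apply: (@addrI _ (u 0)); rewrite addr0.
by rewrite -{1}(scale1r (u 0)) -Lu scale1r addr0.
Qed.

Lemma SpD (u : G I -> G I) : is_Sp u -> forall x y, u (x + y) = u x + u y.
Proof. by case=> Lu _ _ x y; rewrite -{1}(scale1r x) Lu scale1r. Qed.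

Lemma SpZ (u : G I -> G I) : is_Sp u -> forall k x, u (k *: x) = k *: u x.
Proof. by move=> Hu k x; case: (Hu) => Lu _ _; rewrite -[k *: x]addr0 Lu Sp0 // addr0. Qed.

End Tr.

Section Step.
Variable I : finType.
Implicit Types (x y z a b d v : G I).

Lemma omega_addr_fun x : forall y z, omega x (y + z) = omega x y + omega x z.
Proof. exact: omega_addr. Qed.

Lemma exists_x (U : {vspace G I}) a b : a \notin U -> b \notin U -> omega a b = 0 ->
  exists x, [/\ forall z, z \in U -> omega x z = omega a z, omega x a = 1 & omega x b = 1].
Proof.
move=> aU bU ab0.
pose X := (vbasis U : seq (G I)).
have spX : <<X>>%VS = U by apply: span_basis (vbasisP U).
have fX : free X by apply: basis_free (vbasisP U).
have aX : a \notin <<X>>%VS by rewrite spX.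
have faX : free (a :: X) by rewrite free_cons aX.
have XU y : y \in X -> y \in U by move=> Hy; rewrite -spX memv_span.
case: (boolP (b \in <<a :: X>>%VS)) => Hb.
- have [x Hx] := prescribe (fun y => if y == a then 1 else omega a y) faX.
  have xa : omega x a = 1 by rewrite Hx ?mem_head ?eqxx.
  have xU : forall z, z \in U -> omega x z = omega a z.
    move=> z; rewrite -spX; apply: agree_span; try exact: omega_addr_fun.
    move=> y Hy; rewrite Hx ?inE ?Hy ?orbT //.
    case: eqP => // ya; move: aU; by rewrite -ya XU.
  exists x; split => //.
  move: Hb; rewrite span_cons => /memv_addP [w1 /vlineP [k ->] [z0 z0U Eb]].
  subst b; case: (F2_cases k) => Hk; rewrite Hk in ab0 bU *.
    by move: bU; rewrite scale0r add0r -spX z0U.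
  rewrite scale1r in ab0 *.
  rewrite spX in z0U.
  rewrite omega_addr xa xU // .
  by rewrite omega_addr omega_alt add0r in ab0; rewrite ab0 addr0.
- have fbaX : free (b :: a :: X) by rewrite free_cons Hb.
  have [x Hx] := prescribe (fun y => if y == b then 1 else if y == a then 1 else omega a y) fbaX.
  have xb : omega x b = 1 by rewrite Hx ?mem_head ?eqxx.
  have ba : (a == b) = false.
    apply/negP => /eqP ab; move: Hb; by rewrite -ab memv_span ?mem_head.
  have xa : omega x a = 1 by rewrite Hx ?inE ?eqxx ?orbT // ba.
  exists x; split => // z; rewrite -spX; apply: agree_span; try exact: omega_addr_fun.
  move=> y Hy; rewrite Hx ?inE ?Hy ?orbT //.
  case: eqP => yb; first by move: bU; rewrite -yb XU.
  case: eqP => // ya; move: aU; by rewrite -ya XU.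
Qed.

Lemma step (U : {vspace G I}) a b : a \notin U -> b \notin U ->
  (forall z, z \in U -> omega a z = omega b z) ->
  exists v : G I -> G I, [/\ is_Sp v, forall z, z \in U -> v z = z & v a = b].
Proof.
move=> aU bU Hab.
case: (F2_cases (omega a b)) => ab.
- have [x [xU xa xb]] := exists_x aU bU ab.
  exists (tr (x + b) \o tr (a + x)); split.
  + by apply: comp_Sp; apply: tr_Sp.
  + move=> z zU /=.
    rewrite {2}/tr omega_addr (omega_sym z a) (omega_sym z x) xU // F2_dbl scale0r addr0.
    rewrite /tr omega_addr (omega_sym z x) (omega_sym z b) xU // Hab // F2_dbl.
    by rewrite scale0r addr0.
  + rewrite /= {2}/tr omega_addr omega_alt add0r omega_sym xa scale1r addrA G_dbl add0r.
    by rewrite /tr omega_addr omega_alt add0r xb scale1r addrA G_dbl add0r.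
- exists (tr (a + b)); split.
  + exact: tr_Sp.
  + move=> z zU; rewrite /tr omega_addr (omega_sym z a) (omega_sym z b) Hab //.
    by rewrite F2_dbl scale0r addr0.
  + by rewrite /tr omega_addr omega_alt add0r ab scale1r addrA G_dbl add0r.
Qed.
End Step.

Section Witt.
Variable I : finType.

Lemma witt (s : seq (G I)) (T : G I -> G I) :
  {in <<s>>%VS &, forall x y, T (x + y) = T x + T y} ->
  {in <<s>>%VS &, injective T} ->
  {in <<s>>%VS &, forall x y, omega (T x) (T y) = omega x y} ->
  exists u, is_Sp u /\ {in <<s>>%VS, forall x, u x = T x}.
Proof.
elim: s => [|w s IH] HD HI HO.
  exists id; split; first exact: id_Sp.
  move=> x; rewrite span_nil memv0 => /eqP ->.
  have H0 : (0 : G I) \in <<[::]>>%VS by rewrite mem0v.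
  by apply: (@addrI _ (T 0)); rewrite -HD // !addr0.
have sub : forall x, x \in <<s>>%VS -> x \in <<w :: s>>%VS.
  by move=> x; rewrite span_cons => Hx; apply: (subvP (addvSr _ _)).
have [u0 [Su0 Eu0]] : exists u, is_Sp u /\ {in <<s>>%VS, forall x, u x = T x}.
  apply: IH.
  - by move=> x y Hx Hy; apply: HD; apply: sub.
  - by move=> x y Hx Hy; apply: HI; apply: sub.
  - by move=> x y Hx Hy; apply: HO; apply: sub.
have wsp : w \in <<w :: s>>%VS by rewrite memv_span ?mem_head.
have T0 : T 0 = 0.
  have H0 : (0 : G I) \in <<w :: s>>%VS by rewrite mem0v.
  by apply: (@addrI _ (T 0)); rewrite -HD // !addr0.
have decomp : forall x, x \in <<w :: s>>%VS ->
    exists k : 'F_2, exists2 z, z \in <<s>>%VS & x = k *: w + z.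
  move=> x; rewrite span_cons => /memv_addP [w1 /vlineP [k ->] [z zs ->]].
  by exists k; exists z.
have TkE : forall (k : 'F_2) z, z \in <<s>>%VS -> T (k *: w + z) = k *: T w + T z.
  move=> k z zs; rewrite HD; [|by rewrite memvZ|by rewrite sub].
  by case: (F2_cases k) => ->; rewrite ?scale0r ?T0 ?scale1r.
case: (boolP (w \in <<s>>%VS)) => ws.
  exists u0; split => //; move=> x Hx; have [k [z zs Ex]] := decomp x Hx; rewrite Ex.
  by rewrite (SpD Su0) (SpZ Su0) !Eu0 ?TkE.
case: (Su0) => _ [g gK Kg] Ou0.
have gs : g (T w) \notin <<s>>%VS.
  apply/negP => Hg; move/negP: ws; apply.
  have -> : w = g (T w); last by [].
  apply: HI; [exact: wsp | exact: sub | ].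
  by rewrite -{1}(Kg (T w)) Eu0.
have [v [Sv Fv vw]] := step ws gs (fun z zs => etrans (esym (HO _ _ wsp (sub _ zs)))
                                   (etrans (f_equal2 omega (esym (Kg (T w))) (esym (Eu0 _ zs)))
                                           (Ou0 _ _))).
exists (u0 \o v); split; first exact: comp_Sp.
move=> x Hx; have [k [z zs Ex]] := decomp x Hx; rewrite Ex /=.
by rewrite (SpD Sv) (SpZ Sv) vw Fv // (SpD Su0) (SpZ Su0) Kg Eu0 // TkE.
Qed.
End Witt.

Section Dsum.
Variables (M : finType) (n : nat) (own : 'I_n -> M).

Lemma loc_dsum (u : forall alpha : M, G (Qub own alpha) -> G (Qub own alpha)) alpha f :
  loc_comp own alpha (dsum own u f) = u alpha (loc_comp own alpha f).
Proof.
apply/ffunP => [[j e]]; rewrite !ffunE /=.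
have E : own j = alpha := eqP e. subst alpha.
by rewrite (bool_irrelevance e (eqxx (own j))).
Qed.

Lemma loc_lin alpha k (x y : G 'I_n) :
  loc_comp own alpha (k *: x + y) = k *: loc_comp own alpha x + loc_comp own alpha y.
Proof. by apply/ffunP => j; rewrite !ffunE. Qed.

Lemma locD alpha (x y : G 'I_n) :
  loc_comp own alpha (x + y) = loc_comp own alpha x + loc_comp own alpha y.
Proof. by apply/ffunP => j; rewrite !ffunE. Qed.

Lemma locB alpha (x y : G 'I_n) :
  loc_comp own alpha (x - y) = loc_comp own alpha x - loc_comp own alpha y.
Proof. by apply/ffunP => j; rewrite !ffunE. Qed.

Lemma locZ alpha k (x : G 'I_n) :
  loc_comp own alpha (k *: x) = k *: loc_comp own alpha x.
Proof. by apply/ffunP => j; rewrite !ffunE. Qed.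

Lemma dsum_lin (u : forall alpha : M, G (Qub own alpha) -> G (Qub own alpha)) :
  (forall alpha, linear (u alpha)) -> linear (dsum own u).
Proof.
move=> Lu k x y; apply/ffunP => j; rewrite !ffunE loc_lin Lu.
by rewrite !ffunE.
Qed.

Lemma dsum_cancel (u v : forall alpha : M, G (Qub own alpha) -> G (Qub own alpha)) :
  (forall alpha, cancel (u alpha) (v alpha)) -> cancel (dsum own u) (dsum own v).
Proof. by move=> K x; apply/ffunP => j; rewrite ffunE loc_dsum K ffunE. Qed.
End Dsum.

From Stdlib Require Import ClassicalEpsilon.

Lemma dir12 (M : finType) (n : nat) (own : 'I_n -> M)
    (S S' : {vspace G 'I_n}) :
  (exists u : forall alpha : M, G (Qub own alpha) -> G (Qub own alpha),
      (forall alpha, is_Sp (u alpha)) /\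
      (forall y : G 'I_n, y \in S' <-> exists2 x, x \in S & y = dsum own u x))
  ->
  (exists T : subvs_of S -> subvs_of S',
      [/\ linear T, bijective T,
          (forall (f g : subvs_of S) (alpha : M),
             omega (loc_comp own alpha (vsval (T f))) (loc_comp own alpha (vsval (T g)))
             = omega (loc_comp own alpha (vsval f)) (loc_comp own alpha (vsval g)))
        & (forall (alpha : M) (y : subvs_of S'),
             loc_comp own alpha (vsval y) = 0 <->
             exists x : subvs_of S, loc_comp own alpha (vsval x) = 0 /\ T x = y)]).
Proof.
move=> [u [Su HS']].
have Hinv : forall alpha, {g | cancel (u alpha) g /\ cancel g (u alpha)}.
  move=> alpha; apply: constructive_indefinite_description.
  by case: (Su alpha) => _ [g h1 h2] _; exists g.
pose ui alpha := proj1_sig (Hinv alpha).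
have K1 : cancel (dsum own u) (dsum own ui).
  by apply: dsum_cancel => alpha; case: (proj2_sig (Hinv alpha)).
have K2 : cancel (dsum own ui) (dsum own u).
  by apply: dsum_cancel => alpha; case: (proj2_sig (Hinv alpha)).
have mS' : forall x, x \in S -> dsum own u x \in S'.
  by move=> x xS; apply/HS'; exists x.
have mS : forall y, y \in S' -> dsum own ui y \in S.
  by move=> y /HS' [x xS ->]; rewrite K1.
pose T (s : subvs_of S) := vsproj S' (dsum own u (vsval s)).
pose Ti (t : subvs_of S') := vsproj S (dsum own ui (vsval t)).
have TE s : vsval (T s) = dsum own u (vsval s) by rewrite vsprojK // mS' // subvsP.
have TiE t : vsval (Ti t) = dsum own ui (vsval t) by rewrite vsprojK // mS // subvsP.
have Lu : forall alpha, linear (u alpha) by move=> alpha; case: (Su alpha).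
have KT : cancel T Ti by move=> s; apply: val_inj; rewrite /= TiE TE K1.
have KTi : cancel Ti T by move=> t; apply: val_inj; rewrite /= TE TiE K2.
exists T; split.
- move=> k x y; apply: val_inj; rewrite /= !TE -(dsum_lin Lu).
  by rewrite [vsval (k *: x + y)]linearP.
- by exists Ti.
- by move=> f g alpha; rewrite !TE !loc_dsum; case: (Su alpha) => _ _ ->.
- move=> alpha y; split.
  + move=> Hy; exists (Ti y); split => //.
    have : u alpha (loc_comp own alpha (vsval (Ti y))) = u alpha 0.
      by rewrite -loc_dsum -TE KTi Hy Sp0.
    by case: (Su alpha) => _ /bij_inj Hi _; apply: Hi.
  + move=> [x [Hx <-]]; by rewrite TE loc_dsum Hx Sp0.
Qed.

Lemma dir21 (M : finType) (n : nat) (own : 'I_n -> M)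
    (S S' : {vspace G 'I_n}) :
  (exists T : subvs_of S -> subvs_of S',
      [/\ linear T, bijective T,
          (forall (f g : subvs_of S) (alpha : M),
             omega (loc_comp own alpha (vsval (T f))) (loc_comp own alpha (vsval (T g)))
             = omega (loc_comp own alpha (vsval f)) (loc_comp own alpha (vsval g)))
        & (forall (alpha : M) (y : subvs_of S'),
             loc_comp own alpha (vsval y) = 0 <->
             exists x : subvs_of S, loc_comp own alpha (vsval x) = 0 /\ T x = y)]) ->
  (exists u : forall alpha : M, G (Qub own alpha) -> G (Qub own alpha),
      (forall alpha, is_Sp (u alpha)) /\
      (forall y : G 'I_n, y \in S' <-> exists2 x, x \in S & y = dsum own u x)).
Proof.
move=> [T [LT [Tinv KT KTi] OT HT]].
pose Tf x := vsval (T (vsproj S x)).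
have TD a b : T (a + b) = T a + T b by rewrite -{1}(scale1r a) LT scale1r.
have TfD x y : Tf (x + y) = Tf x + Tf y by rewrite /Tf linearD TD linearD.
have TfB x y : Tf (x - y) = Tf x - Tf y by rewrite !G_opp TfD.
have Hex : forall alpha, exists ua : G (Qub own alpha) -> G (Qub own alpha),
    is_Sp ua /\ (forall x, x \in S -> ua (loc_comp own alpha x) = loc_comp own alpha (Tf x)).
  move=> alpha.
  pose loc := loc_comp own alpha.
  have loc0 : loc 0 = 0 by apply/ffunP => j; rewrite !ffunE.
  have locS (J : Type) (r : seq J) (k : J -> 'F_2) (F : J -> G 'I_n) :
      loc (\sum_(i <- r) k i *: F i) = \sum_(i <- r) k i *: loc (F i).
    rewrite (big_morph loc (locD own alpha) loc0); apply: eq_bigr => i _.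
    exact: locZ.
  pose sa := map loc (vbasis S).
  have memW1 : forall x, x \in S -> loc x \in <<sa>>%VS.
    move=> x xS; rewrite (coord_vbasis xS) locS; apply: memv_suml => i _.
    apply: memvZ; apply: memv_span; apply: map_f; apply: mem_nth; by rewrite size_tuple.
  have memW2 : forall z, z \in <<sa>>%VS -> exists2 x, x \in S & z = loc x.
    move=> z Hz; have := coord_span (X := in_tuple sa) Hz; rewrite /= => Ez.
    have szs : size sa = size (vbasis S) by rewrite size_map.
    exists (\sum_(i < size sa) coord (in_tuple sa) i z *: (vbasis S)`_i).
      apply: memv_suml => i _; apply: memvZ; apply: vbasis_mem; apply: mem_nth.
      by rewrite -szs.
    rewrite locS {1}Ez; apply: eq_bigr => i _; congr (_ *: _).
    by rewrite /sa (nth_map 0) // -szs.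
  have wd : forall x1 x2, x1 \in S -> x2 \in S -> loc x1 = loc x2 -> loc (Tf x1) = loc (Tf x2).
    move=> x1 x2 x1S x2S E.
    have dS : x1 - x2 \in S by rewrite memvB.
    have : loc (vsval (T (vsproj S (x1 - x2)))) = 0.
      apply/(HT alpha); exists (vsproj S (x1 - x2)); split => //.
      by rewrite vsprojK // locB -/loc E subrr.
    rewrite -/(Tf _) TfB /loc locB => /eqP; rewrite subr_eq0 => /eqP; exact.
  pose Ta z := if [pick x | (x \in S) && (loc x == z)] is Some x then loc (Tf x) else 0.
  have TaE : forall x, x \in S -> Ta (loc x) = loc (Tf x).
    move=> x xS; rewrite /Ta; case: pickP => [x' /andP [x'S /eqP E] | H].
      exact: wd.
    by have := H x; rewrite xS eqxx.
  have HA : {in <<sa>>%VS &, forall x y, Ta (x + y) = Ta x + Ta y}.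
    move=> z1 z2 /memW2 [x1 x1S ->] /memW2 [x2 x2S ->].
    by rewrite /loc -locD -/loc !TaE ?memvD // TfD /loc locD.
  have HI : {in <<sa>>%VS &, injective Ta}.
    move=> z1 z2 /memW2 [x1 x1S ->] /memW2 [x2 x2S ->].
    rewrite !TaE // => E.
    have : loc (vsval (T (vsproj S (x1 - x2)))) = 0.
      by rewrite /loc -/(Tf _) TfB locB -/loc E subrr.
    move/(HT alpha) => [d [Hd Td]].
    have dE : d = vsproj S (x1 - x2) by rewrite -(KT d) Td KT.
    apply/eqP; rewrite -subr_eq0 -locB; apply/eqP.
    by rewrite dE vsprojK ?memvB in Hd.
  have HO : {in <<sa>>%VS &, forall x y, omega (Ta x) (Ta y) = omega x y}.
    move=> z1 z2 /memW2 [x1 x1S ->] /memW2 [x2 x2S ->].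
    rewrite !TaE //.
    have := OT (vsproj S x1) (vsproj S x2) alpha.
    by rewrite !vsprojK.
  have [ua [Sua Eua]] := witt HA HI HO.
  exists ua; split => // x xS; rewrite Eua ?memW1 //; exact: TaE.
have [u Hu] : exists u : forall alpha : M, G (Qub own alpha) -> G (Qub own alpha),
    forall alpha, is_Sp (u alpha) /\
      (forall x, x \in S -> u alpha (loc_comp own alpha x) = loc_comp own alpha (Tf x)).
  exists (fun alpha => proj1_sig (constructive_indefinite_description _ (Hex alpha))).
  move=> alpha; exact: (proj2_sig (constructive_indefinite_description _ (Hex alpha))).
have dsE : forall x, x \in S -> dsum own u x = Tf x.
  move=> x xS; apply/ffunP => j; rewrite ffunE (proj2 (Hu (own j))) //.
  by rewrite ffunE.
exists u; split; first by move=> alpha; case: (Hu alpha).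
move=> y; split.
- move=> yS; exists (vsval (Tinv (vsproj S' y))); first exact: subvsP.
  by rewrite dsE ?subvsP // /Tf vsvalK KTi vsprojK.
- by move=> [x xS ->]; rewrite dsE // subvsP.
Qed.

Unset Implicit Arguments.

Theorem lemma1 (M : finType) (n : nat) (own : 'I_n -> M)
    (S S' : {vspace G 'I_n}) :
  (exists u : forall alpha : M, G (Qub own alpha) -> G (Qub own alpha),
      (forall alpha, is_Sp (u alpha)) /\
      (forall y : G 'I_n, y \in S' <-> exists2 x, x \in S & y = dsum own u x))
  <->
  (exists T : subvs_of S -> subvs_of S',
      [/\ linear T, bijective T,
          (forall (f g : subvs_of S) (alpha : M),
             omega (loc_comp own alpha (vsval (T f))) (loc_comp own alpha (vsval (T g)))
             = omega (loc_comp own alpha (vsval f)) (loc_comp own alpha (vsval g)))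
        & (forall (alpha : M) (y : subvs_of S'),
             loc_comp own alpha (vsval y) = 0 <->
             exists x : subvs_of S, loc_comp own alpha (vsval x) = 0 /\ T x = y)]).
Proof. split; [exact: dir12 | exact: dir21]. Qed.
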